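(* There are absolute constants $c_1,c_2>0$ such that the following holds. Let $\gamma\ge\pi$ be a real number and $n\ge\gamma$ an integer. Then there exist a real number $g$ with $|g-\gamma|\le c_1\sqrt{\gamma\log n}$ and a $B^*[g]$ set $S\subseteq\{1,\dots,n\}$ with $|S|\ge 2\sqrt{\gamma n/\pi}-c_2\big(\gamma+(\gamma n)^{1/4}\big)$. (In the paper's notation: $g=\gamma+O(\sqrt{\gamma\log n})$ and $|S|\ge2\sqrt{\gamma n/\pi}+O(\gamma+(\gamma n)^{1/4})$.)
   Context: For real $g>0$, a set $S$ of integers is a $B^*[g]$ set if for every integer $m$ there are at most $g$ ordered pairs $(s_1,s_2)\in S\times S$ with $s_1+s_2=m$. *)

(* Defs.v *)
From Stdlib Require Import Reals ZArith List.
Import ListNotations.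
Open Scope R_scope.

Definition rep_count (S : list Z) (m : Z) : nat :=
  length (filter (fun p : Z * Z => Z.eqb (fst p + snd p) m) (list_prod S S)).

Definition BstarSet (g : R) (S : list Z) : Prop :=
  NoDup S /\ forall m : Z, INR (rep_count S m) <= g.

(* Main.v *)
Require Import Defs.
From Stdlib Require Import Reals ZArith List.
From Stdlib Require Import Lia Lra Bool.
Import ListNotations.
Open Scope R_scope.

From HB Require Import structures.
Module BoseM.
From mathcomp Require Import all_boot all_order all_algebra all_fingroup all_solvable all_field.
From Stdlib Require Import Lia.
From mathcomp Require Import zify ring.
Set Implicit Arguments. Unset Strict Implicit. Unset Printing Implicit Defensive.
Import GRing.Theory.
Local Open Scope ring_scope.

Section Bose.
Variable F : finFieldType.
Variable k : nat.
Hypothesis k_gt0 : (0 < k)%N.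
Hypothesis cardF : #|F| = (2 ^ k * 2 ^ k)%N.
Hypothesis char2 : (2 \in [pchar F])%N.

Let q := (2 ^ k)%N.
Let Q := (q * q).-1.

Lemma q_ge2 : (2 <= q)%N.
Proof. rewrite /q; case: k k_gt0 => // k' _; rewrite expnS. have := expn_gt0 2 k'. lia. Qed.

Lemma q_ltQ : (q < Q)%N.
Proof. have := q_ge2; rewrite /Q. nia. Qed.

Lemma exists_gen : exists u : {unit F}, #[u]%g = Q /\ forall v : {unit F}, exists i, v = (u ^+ i)%g.
Proof.
have /cyclicP [u Hu] := field_unit_group_cyclic [set: {unit F}]%G.
exists u; split.
  by rewrite /order -Hu card_finField_unit cardF.
move=> v; apply/cycleP; by rewrite -Hu inE.
Qed.

Variable u : {unit F}.
Hypothesis ordu : #[u]%g = Q.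
Hypothesis genu : forall v : {unit F}, exists i, v = (u ^+ i)%g.

Let th : F := FinRing.uval u.

Lemma thX i : th ^+ i = FinRing.uval (u ^+ i)%g.
Proof. by rewrite FinRing.val_unitX. Qed.

Lemma pow_inj i j : (i < Q)%N -> (j < Q)%N -> th ^+ i = th ^+ j -> i = j.
Proof.
move=> hi hj; rewrite !thX => /val_inj /eqP.
rewrite eq_expg_mod_order ordu !modn_small // => /eqP //.
Qed.

Lemma th_neq0 : th != 0.
Proof. rewrite -unitfE. exact: (valP u). Qed.

Lemma thQ : th ^+ Q = 1.
Proof. by rewrite thX -ordu expg_order. Qed.

Lemma dlog y : y != 0 -> exists2 i, (i < Q)%N & th ^+ i = y.
Proof.
move=> ynz; have Uy : y \is a GRing.unit by rewrite unitfE.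
have [i Hi] := genu (FinRing.Unit Uy).
exists (i %% Q)%N; first by rewrite ltn_mod; have := q_ltQ; lia.
by rewrite thX -ordu expg_mod_order -Hi.
Qed.

Lemma frobD j (x y : F) : (x + y) ^+ (2 ^ j) = x ^+ (2 ^ j) + y ^+ (2 ^ j).
Proof.
elim: j => [|j IH]; first by rewrite !expr1.
rewrite expnSr !exprM IH sqrrD.
by rewrite (mulrn_pchar char2) addr0.
Qed.

Definition inFq (x : F) := x ^+ q == x.

Lemma inFqD x y : inFq x -> inFq y -> inFq (x + y).
Proof. by rewrite /inFq /q frobD => /eqP -> /eqP ->. Qed.
Lemma inFqM x y : inFq x -> inFq y -> inFq (x * y).
Proof. by rewrite /inFq exprMn => /eqP -> /eqP ->. Qed.
Lemma inFqN x : inFq x -> inFq (- x).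
Proof. by rewrite (oppr_pchar2 char2). Qed.
Lemma inFqV x : inFq x -> inFq (x^-1).
Proof. by rewrite /inFq exprVn => /eqP ->. Qed.
Lemma inFq0 : inFq 0.
Proof. by rewrite /inFq expr0n; have := q_ge2; case: (q) => //. Qed.

Lemma th_notin : ~~ inFq th.
Proof.
apply/negP => /eqP H.
have : q = 1%N.
  apply: pow_inj; [exact: q_ltQ | have := q_ltQ; lia | by rewrite expr1].
have := q_ge2; lia.
Qed.

Definition xs := 0 :: [seq th ^+ ((q + 1) * j) | j <- iota 0 q.-1].

Lemma xs_inFq x : x \in xs -> inFq x.
Proof.
rewrite inE => /orP [/eqP -> | /mapP [j _ ->]]; first exact: inFq0.
rewrite /inFq -exprM.
have -> : ((q + 1) * j * q = (q + 1) * j + Q * j)%N.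
  rewrite /Q; have := q_ge2; nia.
by rewrite exprD [th ^+ (Q * j)]exprM thQ expr1n mulr1.
Qed.

Lemma xs_uniq : uniq xs.
Proof.
rewrite /= map_inj_in_uniq ?iota_uniq ?andbT.
  apply/mapP => [[j _ /esym/eqP]]; apply/negP; exact: expf_neq0 th_neq0.
move=> i j; rewrite !mem_iota /= => hi hj /pow_inj; have := q_ge2.
move=> hq H; suff: ((q + 1) * i = (q + 1) * j)%N by have := hq; nia.
apply: H; rewrite /Q; nia.
Qed.

Lemma size_xs : size xs = q.
Proof. by rewrite /= size_map size_iota; have := q_ge2; case: (q). Qed.

Definition bose := [seq i <- iota 0 Q | inFq (th ^+ i - th)].

Lemma bose_uniq : uniq bose.
Proof. by rewrite filter_uniq ?iota_uniq. Qed.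

Lemma bose_lt i : i \in bose -> (i < Q)%N.
Proof. by rewrite mem_filter mem_iota => /andP [_ /andP [_]]. Qed.

Lemma bose_size : (q <= size bose)%N.
Proof.
rewrite -size_xs -(size_map (fun i => th ^+ i - th)).
apply: uniq_leq_size; first exact: xs_uniq.
move=> x xin; have Fx := xs_inFq xin.
have nz : th + x != 0.
  apply/negP => /eqP H; move/negP: th_notin; apply.
  have -> : th = - x by apply/eqP; rewrite -addr_eq0 H.
  exact: inFqN.
have [i ilt Hi] := dlog nz.
apply/mapP; exists i; last by rewrite Hi addrC addKr.
rewrite mem_filter mem_iota ilt /= Hi.
by rewrite addrC addKr Fx.
Qed.

Lemma bose_sidon a b c d : a \in bose -> b \in bose -> c \in bose -> d \in bose ->
  (a + b = c + d)%N -> (a = c /\ b = d) \/ (a = d /\ b = c).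
Proof.
move=> ha hb hc hd habcd.
have la := bose_lt ha; have lb := bose_lt hb; have lc := bose_lt hc; have ld := bose_lt hd.
move: ha hb hc hd; rewrite !mem_filter => /andP [Fa _] /andP [Fb _] /andP [Fc _] /andP [Fd _].
set xa := th ^+ a - th in Fa; set xb := th ^+ b - th in Fb.
set xc := th ^+ c - th in Fc; set xd := th ^+ d - th in Fd.
have E : (th + xa) * (th + xb) = (th + xc) * (th + xd).
  by rewrite /xa /xb /xc /xd !(addrC th) !addrNK -!exprD habcd.
have E2 : th * (xa + xb - xc - xd) = xc * xd - xa * xb.
  have -> : th * (xa + xb - xc - xd) = ((th + xa) * (th + xb) - (th + xc) * (th + xd)) + (xc * xd - xa * xb) by ring.
  by rewrite E subrr add0r.
have Dz : xa + xb - xc - xd = 0.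
  apply/eqP/negPn/negP => nz; move/negP: th_notin; apply.
  have -> : th = (xc * xd - xa * xb) / (xa + xb - xc - xd).
    by rewrite -E2 mulfK.
  apply: inFqM; last apply: inFqV.
    by apply: inFqD; [apply: inFqM | apply: inFqN; apply: inFqM].
  apply: inFqD; last apply: inFqN => //.
  by apply: inFqD; [apply: inFqD | apply: inFqN].
have Pz : xc * xd - xa * xb = 0 by rewrite -E2 Dz mulr0.
have : (xa - xc) * (xa - xd) = 0.
  have -> : (xa - xc) * (xa - xd) = xa * (xa + xb - xc - xd) + (xc * xd - xa * xb)
    by ring.
  by rewrite Dz Pz mulr0 addr0.
move/eqP; rewrite mulf_eq0 => /orP [] /eqP /eqP; rewrite subr_eq0 => /eqP H.
  left; have ac : a = c by apply: pow_inj => //; move: H; rewrite /xa /xc => /(congr1 (fun z => z + th)); rewrite !subrK.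
  split => //; lia.
right; have ad : a = d by apply: pow_inj => //; move: H; rewrite /xa /xd => /(congr1 (fun z => z + th)); rewrite !subrK.
split => //; lia.
Qed.

End Bose.

Lemma bose_exists k : (0 < k)%N -> exists s : seq nat,
  [/\ uniq s, (2 ^ k <= size s)%N, (forall i, i \in s -> (i < (2 ^ k * 2 ^ k).-1)%N) &
   forall a b c d, a \in s -> b \in s -> c \in s -> d \in s ->
  (a + b = c + d)%N -> (a = c /\ b = d) \/ (a = d /\ b = c)].
Proof.
move=> k0.
have [F ch cF] := @pPrimePowerField 2 (k + k) (erefl true) ltac:(lia).
have cF' : #|F| = (2 ^ k * 2 ^ k)%N by rewrite cF expnD.
have [u [ou gu]] := exists_gen cF'.
exists (bose k u); split.
- exact: bose_uniq.
- exact: (bose_size k0 cF' ch ou gu).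
- move=> i; exact: (bose_lt (k := k) (u := u)).
- move=> a b c d; exact: (bose_sidon k0 cF' ch ou).
Qed.

Lemma in_In (x : nat) (s : seq nat) : x \in s <-> List.In x s.
Proof.
elim: s => [|y s IH] //=; rewrite inE; split.
- by case/orP => [/eqP ->|/IH]; [left|right].
- by case => [->|/IH ->]; rewrite ?eqxx ?orbT.
Qed.

Lemma uniq_NoDup (s : seq nat) : uniq s -> List.NoDup s.
Proof.
elim: s => [|y s IH] /=; first by constructor.
case/andP => ny us; constructor; last exact: IH.
by move/in_In; apply/negP.
Qed.

Local Close Scope ring_scope.
Lemma expn_pow m n : expn m n = Nat.pow m n.
Proof. elim: n => [|n IH] //; by rewrite expnS IH. Qed.

Lemma bose_list k : (0 < k)%coq_nat -> exists s : list nat,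
  List.NoDup s /\ (Nat.pow 2 k <= length s)%coq_nat /\ (forall i, List.In i s -> (i < Nat.sub (Nat.mul (Nat.pow 2 k) (Nat.pow 2 k)) 1)%coq_nat) /\
   forall a b c d, List.In a s -> List.In b s -> List.In c s -> List.In d s ->
  (a + b = c + d)%coq_nat -> (a = c /\ b = d) \/ (a = d /\ b = c).
Proof.
move=> /ltP k0; have [s [us ss ls sid]] := bose_exists k0.
exists s; split; first exact: uniq_NoDup.
split; first by apply/leP; rewrite -expn_pow.
split; first by move=> i /in_In /ls H; apply/ltP; rewrite -expn_pow multE minusE subn1.
by move=> a b c d /in_In ha /in_In hb /in_In hc /in_In hd; apply: sid.
Qed.
End BoseM.



Fixpoint sumR (n : nat) (f : nat -> R) : R :=
  match n with O => 0 | S k => sumR k f + f k end.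

Lemma sumR_ext n f g : (forall i, (i < n)%nat -> f i = g i) -> sumR n f = sumR n g.
Proof. induction n; simpl; intros H; [reflexivity|]. rewrite IHn, H; auto. Qed.

Lemma sumR_le n f g : (forall i, (i < n)%nat -> f i <= g i) -> sumR n f <= sumR n g.
Proof. induction n; simpl; intros H; [lra|]. assert (f n <= g n) by auto. assert (sumR n f <= sumR n g) by auto. lra. Qed.

Lemma sumR_plus n f g : sumR n (fun i => f i + g i) = sumR n f + sumR n g.
Proof. induction n; simpl; [lra|]. rewrite IHn; lra. Qed.

Lemma sumR_scal n c f : sumR n (fun i => c * f i) = c * sumR n f.
Proof. induction n; simpl; [lra|]. rewrite IHn; lra. Qed.

Lemma sumR_const0 n : sumR n (fun _ => 0) = 0.
Proof. induction n; simpl; [lra|]. rewrite IHn; lra. Qed.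

Lemma sumR_nonneg n f : (forall i, (i < n)%nat -> 0 <= f i) -> 0 <= sumR n f.
Proof. intros H. rewrite <- (sumR_const0 n). apply sumR_le. auto. Qed.

Lemma sumR_shift m g : sumR (S m) g = g O + sumR m (fun i => g (S i)).
Proof. induction m; simpl in *; [lra|]. rewrite IHm. lra. Qed.

Lemma sumR_rev K g : sumR (S K) g = sumR (S K) (fun i => g (K - i)%nat).
Proof.
  induction K.
  - simpl. replace (0 - 0)%nat with 0%nat by lia. reflexivity.
  - change (sumR (S (S K)) g) with (sumR (S K) g + g (S K)).
    rewrite (sumR_shift (S K) (fun i => g (S K - i)%nat)).
    rewrite IHK. replace (S K - 0)%nat with (S K) by lia.
    simpl (S K - S _)%nat. lra.
Qed.

Lemma sumR_add n m f : sumR (n + m) f = sumR n f + sumR m (fun i => f (n + i)%nat).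
Proof. induction m; simpl. rewrite Nat.add_0_r; lra. rewrite Nat.add_succ_r; simpl. rewrite IHm; lra. Qed.

Lemma sumR_mono_len n m f : (n <= m)%nat -> (forall i, (i < m)%nat -> 0 <= f i) -> sumR n f <= sumR m f.
Proof.
  intros H Hf. replace m with (n + (m - n))%nat by lia. rewrite sumR_add.
  assert (0 <= sumR (m - n) (fun i => f (n + i)%nat)); [|lra].
  apply sumR_nonneg. intros; apply Hf; lia.
Qed.

(* central binomial coefficients divided by 4^k *)
Fixpoint cb (k : nat) : R :=
  match k with O => 1 | S j => cb j * (2 * INR j + 1) / (2 * INR j + 2) end.

Lemma cb_S j : cb (S j) = cb j * (2 * INR j + 1) / (2 * INR j + 2).
Proof. reflexivity. Qed.

Lemma cb_pos k : 0 < cb k.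
Proof.
  induction k; simpl; [lra|]. pose proof (pos_INR k).
  apply Rmult_lt_0_compat; [apply Rmult_lt_0_compat; lra | apply Rinv_0_lt_compat; lra].
Qed.

Lemma cb_Sm j : (INR j + 1) * cb (S j) = (INR j + / 2) * cb j.
Proof. rewrite cb_S. pose proof (pos_INR j). field. lra. Qed.

Lemma cb_sq k : cb k * cb k * (2 * INR k + 1) <= 1.
Proof.
  induction k; [simpl; lra|].
  rewrite cb_S, S_INR. pose proof (pos_INR k). pose proof (cb_pos k).
  set (c := cb k) in *. set (x := INR k) in *.
  assert (E: c * (2 * x + 1) / (2 * x + 2) * (c * (2 * x + 1) / (2 * x + 2)) * (2 * (x + 1) + 1)
     = c * c * (2 * x + 1) * ((2*x+1)*(2*x+3) / ((2*x+2)*(2*x+2)))) by (field; lra).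
  rewrite E.
  assert (0 <= c * c * (2 * x + 1)) by (apply Rmult_le_pos; nra).
  assert ((2*x+1)*(2*x+3) / ((2*x+2)*(2*x+2)) <= 1).
  { apply Rmult_le_reg_r with ((2*x+2)*(2*x+2)); [nra|]. unfold Rdiv. rewrite Rmult_assoc, Rinv_l; nra. }
  nra.
Qed.

Lemma cb_sum N : sumR N cb = 2 * INR N * cb N.
Proof.
  induction N; simpl sumR; [simpl; lra|]. rewrite IHN. rewrite S_INR.
  pose proof (cb_Sm N). lra.
Qed.

Definition U n := sumR (S n) (fun i => cb i * cb (n - i)).

Lemma U_step n : U (S n) = U n.
Proof.
  assert (H1: INR (S n) * U (S n) = 2 * sumR (S (S n)) (fun i => INR i * (cb i * cb (S n - i)))).
  { unfold U. rewrite <- sumR_scal.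
    assert (Hr: sumR (S (S n)) (fun i => (INR (S n) - INR i) * (cb i * cb (S n - i)))
              = sumR (S (S n)) (fun i => INR i * (cb i * cb (S n - i)))).
    { rewrite sumR_rev. apply sumR_ext. intros i Hi.
      replace (S n - (S n - i))%nat with i by lia. rewrite minus_INR by lia. ring. }
    transitivity (sumR (S (S n)) (fun i => (INR (S n) - INR i) * (cb i * cb (S n - i)) + INR i * (cb i * cb (S n - i)))).
    { apply sumR_ext; intros; ring. }
    rewrite sumR_plus, Hr. ring. }
  assert (H2: sumR (S (S n)) (fun i => INR i * (cb i * cb (S n - i)))
              = sumR (S n) (fun i => (INR i + /2) * (cb i * cb (n - i)))).
  { rewrite sumR_shift. simpl INR at 1. rewrite Rmult_0_l, Rplus_0_l.
    apply sumR_ext. intros i Hi. replace (S n - S i)%nat with (n - i)%nat by lia.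
    rewrite S_INR. rewrite <- Rmult_assoc, cb_Sm. ring. }
  assert (H3: 2 * sumR (S n) (fun i => INR i * (cb i * cb (n - i))) = INR n * U n).
  { replace (INR n * U n) with (sumR (S n) (fun i => INR n * (cb i * cb (n-i)))) by (unfold U; rewrite sumR_scal; reflexivity).
    assert (Hr: sumR (S n) (fun i => (INR n - INR i) * (cb i * cb (n - i)))
              = sumR (S n) (fun i => INR i * (cb i * cb (n - i)))).
    { rewrite sumR_rev. apply sumR_ext. intros i Hi.
      replace (n - (n - i))%nat with i by lia. rewrite minus_INR by lia. ring. }
    assert (Hs: sumR (S n) (fun i => INR n * (cb i * cb (n-i))) = sumR (S n) (fun i => (INR n - INR i) * (cb i * cb (n - i))) + sumR (S n) (fun i => INR i * (cb i * cb (n - i))))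
      by (rewrite <- sumR_plus; apply sumR_ext; intros; ring).
    rewrite Hs, Hr. ring. }
  assert (H4: sumR (S n) (fun i => (INR i + /2) * (cb i * cb (n - i)))
             = sumR (S n) (fun i => INR i * (cb i * cb (n - i))) + / 2 * U n).
  { unfold U. rewrite <- sumR_scal, <- sumR_plus. apply sumR_ext; intros; ring. }
  rewrite H2, H4 in H1. rewrite S_INR in H1.
  pose proof (pos_INR n).
  apply Rmult_eq_reg_l with (INR n + 1); [|lra]. lra.
Qed.

Lemma U_one n : U n = 1.
Proof. induction n. unfold U; simpl; lra. rewrite U_step; auto. Qed.

Module WallisM.
From Coquelicot Require Import Coquelicot.

Lemma exd_cont (f : R -> R) x : ex_derive f x -> continuous f x.
Proof. apply (@ex_derive_continuous R_AbsRing R_NormedModule). Qed.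

Lemma exRInt_cont (f : R -> R) a b : (forall z, Rmin a b <= z <= Rmax a b -> continuous f z) -> ex_RInt f a b.
Proof. apply (@ex_RInt_continuous R_CompleteNormedModule). Qed.

Definition Iw (m : nat) : R := RInt (fun x => sin x ^ m) 0 (PI / 2).

Lemma sinpow_cont m x : continuous (fun x => sin x ^ m) x.
Proof. apply exd_cont. auto_derive. auto. Qed.

Lemma sinpow_ex m : ex_RInt (fun x => sin x ^ m) 0 (PI/2).
Proof. apply exRInt_cont. intros; apply sinpow_cont. Qed.

Lemma Iw0 : Iw 0 = PI / 2.
Proof. unfold Iw. simpl. rewrite (RInt_const (V:=R_CompleteNormedModule)). unfold scal; simpl; unfold mult; simpl. ring. Qed.

Lemma Iw1 : Iw 1 = 1.
Proof.
  unfold Iw. apply (is_RInt_unique (V:=R_CompleteNormedModule)).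
  replace 1 with (minus ((fun x => - cos x) (PI/2)) ((fun x => - cos x) 0)).
  2:{ simpl. unfold minus, plus, opp; simpl. rewrite cos_PI2, cos_0. ring. }
  apply (is_RInt_derive (V:=R_CompleteNormedModule) (fun x => - cos x)).
  - intros x _. auto_derive; auto. simpl. ring.
  - intros x _. apply sinpow_cont.
Qed.

Lemma Iw_rec m : (INR m + 2) * Iw (m + 2) = (INR m + 1) * Iw m.
Proof.
  set (g := fun x => sin x ^ (m + 1) * cos x).
  set (h := fun x => (INR m + 1) * sin x ^ m - (INR m + 2) * sin x ^ (m + 2)).
  assert (Hd : forall x, is_derive g x (h x)).
  { intros x. unfold g, h. auto_derive; auto.
    replace (m+1)%nat with (S m) by lia. replace (m+2)%nat with (S (S m)) by lia.
    simpl pred. rewrite S_INR. pose proof (sin2_cos2 x). unfold Rsqr in H.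
    simpl. replace (1 * cos x * ((INR m + 1) * sin x ^ m) * cos x) with ((INR m+1) * sin x ^ m * (cos x * cos x)) by ring.
    replace (cos x * cos x) with (1 - sin x * sin x) by lra. ring. }
  assert (Hi : RInt h 0 (PI/2) = minus (g (PI/2)) (g 0)).
  { apply (is_RInt_unique (V:=R_CompleteNormedModule)).
    apply (is_RInt_derive (V:=R_CompleteNormedModule) g). intros; apply Hd.
    intros x _. unfold h. apply exd_cont. auto_derive. auto. }
  assert (Hg : minus (g (PI/2)) (g 0) = 0).
  { unfold g, minus, plus, opp; simpl. rewrite cos_PI2, sin_0.
    replace (m+1)%nat with (S m) by lia. simpl. ring. }
  rewrite Hg in Hi.
  unfold h in Hi.
  rewrite (RInt_minus (V:=R_CompleteNormedModule) (fun x => (INR m + 1) * sin x ^ m) (fun x => (INR m + 2) * sin x ^ (m+2))) in Hi.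
  2,3: apply exRInt_cont; intros; apply exd_cont; auto_derive; auto.
  rewrite (RInt_scal (V:=R_CompleteNormedModule) (fun x => sin x ^ m)) in Hi by apply sinpow_ex.
  rewrite (RInt_scal (V:=R_CompleteNormedModule) (fun x => sin x ^ (m+2))) in Hi by apply sinpow_ex.
  unfold Iw. unfold minus, plus, opp, scal in Hi; simpl in Hi. unfold mult in Hi; simpl in Hi.
  lra.
Qed.


Lemma INR2 : INR 2 = 2. Proof. simpl; lra. Qed.

Lemma Iw_even k : Iw (2*k) = PI/2 * cb k.
Proof.
  induction k.
  - simpl. rewrite Iw0. ring.
  - replace (2 * S k)%nat with (2*k + 2)%nat by lia.
    pose proof (Iw_rec (2*k)) as H. rewrite IHk in H.
    rewrite cb_S. rewrite mult_INR, INR2 in H. pose proof (pos_INR k).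
    apply Rmult_eq_reg_l with (2 * INR k + 2); [|lra].
    rewrite H. field. lra.
Qed.

Lemma Iw_odd k : Iw (2*k+1) * cb k * (2*INR k + 1) = 1.
Proof.
  induction k.
  - simpl. rewrite Iw1. ring.
  - replace (2 * S k + 1)%nat with ((2*k + 1) + 2)%nat by lia.
    pose proof (Iw_rec (2*k+1)) as H.
    rewrite plus_INR, mult_INR, INR2 in H. simpl INR in H.
    rewrite cb_S, S_INR. pose proof (pos_INR k).
    replace (Iw (2 * k + 1 + 2)) with ((2 * INR k + 1 + 1) * Iw (2 * k + 1) / (2 * INR k + 1 + 2)).
    2:{ rewrite <- H. field. lra. }
    transitivity (Iw (2*k+1) * cb k * (2*INR k + 1)); [field; lra | exact IHk].
Qed.

Lemma Iw_mono k : Iw (2*k+1) <= Iw (2*k).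
Proof.
  unfold Iw. apply RInt_le.
  - pose proof PI_RGT_0; lra.
  - apply sinpow_ex.
  - apply sinpow_ex.
  - intros x Hx. replace (2*k+1)%nat with (S (2*k)) by lia. change (sin x ^ S (2*k)) with (sin x * sin x ^ (2*k)).
    pose proof PI_RGT_0.
    assert (0 <= sin x) by (apply sin_ge_0; lra).
    assert (sin x <= 1) by (pose proof (SIN_bound x); lra).
    assert (0 <= sin x ^ (2*k)) by (apply pow_le; lra).
    nra.
Qed.

Lemma wallis k : 2 <= PI * (cb k * cb k * (2 * INR k + 1)).
Proof.
  pose proof (Iw_mono k) as M. pose proof (Iw_odd k) as O. rewrite Iw_even in M.
  pose proof (cb_pos k). pose proof (pos_INR k). pose proof PI_RGT_0.
  assert (Iw (2*k+1) = / (cb k * (2 * INR k + 1))).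
  { apply Rmult_eq_reg_r with (cb k * (2*INR k + 1)); [|nra].
    rewrite Rinv_l by nra. rewrite <- Rmult_assoc. exact O. }
  rewrite H2 in M.
  assert (A: 1 <= PI / 2 * cb k * (cb k * (2 * INR k + 1))).
  { apply Rmult_le_compat_r with (r := cb k * (2 * INR k + 1)) in M; [|nra].
    rewrite Rinv_l in M by nra. lra. }
  lra.
Qed.

End WallisM.


Fixpoint prodR (n : nat) (f : nat -> R) : R :=
  match n with O => 1 | S k => prodR k f * f k end.

Lemma prodR_ext n f g : (forall i, (i < n)%nat -> f i = g i) -> prodR n f = prodR n g.
Proof. induction n; simpl; intros H; [reflexivity|]. rewrite IHn, H; auto. Qed.

Lemma prodR_nonneg n f : (forall i, (i < n)%nat -> 0 <= f i) -> 0 <= prodR n f.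
Proof. induction n; simpl; intros H; [lra|]. apply Rmult_le_pos; auto. Qed.

Lemma prodR_le n f g : (forall i, (i < n)%nat -> 0 <= f i <= g i) -> prodR n f <= prodR n g.
Proof.
  induction n; simpl; intros H; [lra|].
  assert (0 <= prodR n f) by (apply prodR_nonneg; intros; apply H; lia).
  assert (prodR n f <= prodR n g) by (apply IHn; intros; apply H; lia).
  destruct (H n (Nat.lt_succ_diag_r n)).
  apply Rmult_le_compat; lra.
Qed.

Lemma exp_sumR n g : exp (sumR n g) = prodR n (fun i => exp (g i)).
Proof. induction n; simpl. apply exp_0. rewrite exp_plus, IHn. reflexivity. Qed.

Definition b2R (b : bool) : R := if b then 1 else 0.

Lemma b2R_bounds b : 0 <= b2R b <= 1.
Proof. destruct b; simpl; lra. Qed.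

Definition upd (w : nat -> bool) (k : nat) (b : bool) : nat -> bool :=
  fun j => if Nat.eqb j k then b else w j.

Definition dep (D : nat -> bool) (F : (nat -> bool) -> R) : Prop :=
  forall w w', (forall i, D i = true -> w i = w' i) -> F w = F w'.

Lemma dep_mono D D' F : dep D F -> (forall j, D j = true -> D' j = true) -> dep D' F.
Proof. intros H HD w w' Hw. apply H. intros i Hi. apply Hw, HD, Hi. Qed.

Lemma dep_upd D F k b : dep D F -> dep D (fun w => F (upd w k b)).
Proof.
  intros H w w' Hw. apply H. intros i Hi. unfold upd. destruct (Nat.eqb i k); auto.
Qed.

Lemma dep_upd_same D F k b w : dep D F -> D k = false -> F (upd w k b) = F w.
Proof.
  intros H Hk. apply H. intros i Hi. unfold upd. destruct (Nat.eqb_spec i k); auto.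
  subst; congruence.
Qed.

Section Prob.
Variable p : nat -> R.
Hypothesis hp : forall i, 0 <= p i <= 1.

Fixpoint Ex (n : nat) (F : (nat -> bool) -> R) : R :=
  match n with
  | O => F (fun _ => false)
  | S k => p k * Ex k (fun w => F (upd w k true)) + (1 - p k) * Ex k (fun w => F (upd w k false))
  end.

Lemma Ex_ext n F G : (forall w, F w = G w) -> Ex n F = Ex n G.
Proof.
  revert F G; induction n; intros F G H; simpl; auto.
  rewrite (IHn (fun w => F (upd w n true)) (fun w => G (upd w n true))), (IHn (fun w => F (upd w n false)) (fun w => G (upd w n false))).
  reflexivity. all: intros w; apply H.
Qed.

Lemma Ex_le n F G : (forall w, F w <= G w) -> Ex n F <= Ex n G.
Proof.
  revert F G; induction n; intros F G H; simpl; auto.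
  pose proof (IHn (fun w => F (upd w n true)) (fun w => G (upd w n true)) (fun w => H _)).
  pose proof (IHn (fun w => F (upd w n false)) (fun w => G (upd w n false)) (fun w => H _)).
  destruct (hp n). apply Rplus_le_compat; apply Rmult_le_compat_l; lra.
Qed.

Lemma Ex_const n c : Ex n (fun _ => c) = c.
Proof. induction n; simpl; auto. rewrite IHn. ring. Qed.

Lemma Ex_plus n F G : Ex n (fun w => F w + G w) = Ex n F + Ex n G.
Proof.
  revert F G; induction n; intros F G; simpl; auto.
  rewrite (IHn (fun w => F (upd w n true)) (fun w => G (upd w n true))).
  rewrite (IHn (fun w => F (upd w n false)) (fun w => G (upd w n false))). ring.
Qed.

Lemma Ex_scal n c F : Ex n (fun w => c * F w) = c * Ex n F.
Proof.
  revert F; induction n; intros F; simpl; auto.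
  rewrite (IHn (fun w => F (upd w n true))), (IHn (fun w => F (upd w n false))). ring.
Qed.

Lemma Ex_sumR n K F : Ex n (fun w => sumR K (fun m => F m w)) = sumR K (fun m => Ex n (F m)).
Proof.
  induction K; simpl. apply Ex_const.
  rewrite Ex_plus, IHK. reflexivity.
Qed.

Lemma Ex_exists n F c : Ex n F < c -> exists w, F w < c.
Proof.
  intros H. destruct (Classical_Prop.classic (exists w, F w < c)) as [E|E]; auto.
  exfalso. assert (Ex n (fun _ => c) <= Ex n F).
  { apply Ex_le. intros w. destruct (Rlt_le_dec (F w) c); auto. exfalso; apply E; eauto. }
  rewrite Ex_const in H0. lra.
Qed.

Lemma Ex_nodep n D F : dep D F -> D n = false -> Ex (S n) F = Ex n F.
Proof.
  intros H Hn. simpl.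
  rewrite (Ex_ext n (fun w => F (upd w n true)) F), (Ex_ext n (fun w => F (upd w n false)) F).
  ring. all: intros w; apply (dep_upd_same D); auto.
Qed.

Lemma Ex_indep n D1 D2 F G : dep D1 F -> dep D2 G -> (forall i, D1 i = true -> D2 i = false) ->
  Ex n (fun w => F w * G w) = Ex n F * Ex n G.
Proof.
  revert F G; induction n; intros F G H1 H2 Hd; simpl; auto.
  destruct (D1 n) eqn:E1.
  - assert (E2 : D2 n = false) by auto.
    rewrite (Ex_ext n (fun w => F (upd w n true) * G (upd w n true)) (fun w => F (upd w n true) * G w)).
    2:{ intros w; rewrite (dep_upd_same D2 G); auto. }
    rewrite (Ex_ext n (fun w => F (upd w n false) * G (upd w n false)) (fun w => F (upd w n false) * G w)).
    2:{ intros w; rewrite (dep_upd_same D2 G); auto. }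
    rewrite (IHn (fun w => F (upd w n true)) G), (IHn (fun w => F (upd w n false)) G); auto.
    2,3: apply dep_upd; auto.
    rewrite (Ex_ext n (fun w => G (upd w n true)) G), (Ex_ext n (fun w => G (upd w n false)) G).
    2,3: intros w; apply (dep_upd_same D2); auto.
    ring.
  - rewrite (Ex_ext n (fun w => F (upd w n true) * G (upd w n true)) (fun w => F w * G (upd w n true))).
    2:{ intros w; rewrite (dep_upd_same D1 F); auto. }
    rewrite (Ex_ext n (fun w => F (upd w n false) * G (upd w n false)) (fun w => F w * G (upd w n false))).
    2:{ intros w; rewrite (dep_upd_same D1 F); auto. }
    rewrite (IHn F (fun w => G (upd w n true))), (IHn F (fun w => G (upd w n false))); auto.
    2,3: apply dep_upd; auto.
    rewrite (Ex_ext n (fun w => F (upd w n true)) F), (Ex_ext n (fun w => F (upd w n false)) F).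
    2,3: intros w; apply (dep_upd_same D1); auto.
    ring.
Qed.

Lemma Ex_coord n i a b : (i < n)%nat -> Ex n (fun w => if w i then a else b) = p i * a + (1 - p i) * b.
Proof.
  induction n; intros Hi; [lia|].
  destruct (Nat.eq_dec i n).
  - subst. simpl. unfold upd. rewrite Nat.eqb_refl. rewrite !Ex_const. reflexivity.
  - rewrite (Ex_nodep n (fun j => Nat.eqb j i)).
    + apply IHn; lia.
    + intros w w' Hw. rewrite (Hw i); auto. apply Nat.eqb_refl.
    + apply Nat.eqb_neq; auto.
Qed.

Lemma Ex_prod n H (f : nat -> (nat -> bool) -> R) (D E : nat -> nat -> bool) :
  (forall h, dep (E h) (f h)) ->
  (forall h j, E h j = true -> D h j = false) ->
  (forall h j, D h j = true \/ E h j = true -> D (S h) j = true) ->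
  Ex n (fun w => prodR H (fun h => f h w)) = prodR H (fun h => Ex n (f h)).
Proof.
  intros Hf Hd Hm.
  assert (A : forall H, dep (D H) (fun w => prodR H (fun h => f h w)) /\
     Ex n (fun w => prodR H (fun h => f h w)) = prodR H (fun h => Ex n (f h))).
  { intros H0; induction H0 as [|H0 IHH0]; simpl.
    - split. intros w w' _; reflexivity. apply Ex_const.
    - destruct IHH0 as [Hdep Heq]. split.
      + intros w w' Hw. f_equal.
        * apply Hdep. intros i Hi. apply Hw, Hm; auto.
        * apply (Hf H0). intros i Hi. apply Hw, Hm; auto.
      + rewrite (Ex_indep n (D H0) (E H0)); auto.
        rewrite Heq; reflexivity.
        intros i Hi. destruct (E H0 i) eqn:Ei; auto. rewrite (Hd _ _ Ei) in Hi; discriminate. }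
  apply A.
Qed.

End Prob.



Fixpoint sumL {A : Type} (l : list A) (g : A -> R) : R :=
  match l with [] => 0 | x :: l' => g x + sumL l' g end.

Lemma sumL_app {A} (l1 l2 : list A) g : sumL (l1 ++ l2) g = sumL l1 g + sumL l2 g.
Proof. induction l1; simpl; [lra|]. rewrite IHl1; lra. Qed.

Lemma sumL_map {A B} (f : A -> B) l g : sumL (map f l) g = sumL l (fun x => g (f x)).
Proof. induction l; simpl; auto. rewrite IHl; auto. Qed.

Lemma sumL_ext {A} (l : list A) f g : (forall x, In x l -> f x = g x) -> sumL l f = sumL l g.
Proof. induction l; simpl; intros H; auto. rewrite H, IHl; auto. Qed.

Lemma sumL_le {A} (l : list A) f g : (forall x, In x l -> f x <= g x) -> sumL l f <= sumL l g.
Proof. induction l; simpl; intros H; [lra|]. assert (f a <= g a) by auto. assert (sumL l f <= sumL l g) by auto. lra. Qed.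

Lemma sumL_scal {A} (l : list A) c g : sumL l (fun x => c * g x) = c * sumL l g.
Proof. induction l; simpl; [lra|]. rewrite IHl; lra. Qed.

Lemma sumL_plus {A} (l : list A) f g : sumL l (fun x => f x + g x) = sumL l f + sumL l g.
Proof. induction l; simpl; [lra|]. rewrite IHl; lra. Qed.

Lemma sumL_prod {A B} (l1 : list A) (l2 : list B) g :
  sumL (list_prod l1 l2) g = sumL l1 (fun x => sumL l2 (fun y => g (x, y))).
Proof. induction l1; simpl; auto. rewrite sumL_app, sumL_map, IHl1. reflexivity. Qed.

Lemma sumL_filter {A} (l : list A) w g : sumL (filter w l) g = sumL l (fun x => b2R (w x) * g x).
Proof. induction l; simpl; auto. destruct (w a); simpl; rewrite IHl; lra. Qed.

Lemma length_sumL {A} (l : list A) : INR (length l) = sumL l (fun _ => 1).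
Proof. induction l; simpl length; simpl sumL; [simpl; lra|]. rewrite S_INR, IHl; lra. Qed.

Lemma length_filter_sumL {A} (l : list A) P : INR (length (filter P l)) = sumL l (fun x => b2R (P x)).
Proof. rewrite length_sumL, sumL_filter. apply sumL_ext; intros; lra. Qed.

Lemma sumL_seq n g : sumL (seq 0 n) g = sumR n g.
Proof. induction n; [reflexivity|]. rewrite seq_S, sumL_app, IHn. change (sumR (S n) g) with (sumR n g + g n). simpl. lra. Qed.

Lemma rep_count_sumL S m : INR (rep_count S m) = sumL S (fun a => sumL S (fun b => b2R (Z.eqb (a + b) m))).
Proof. unfold rep_count. rewrite length_filter_sumL, sumL_prod. reflexivity. Qed.

Lemma sumL_nonneg {A} (l : list A) g : (forall x, In x l -> 0 <= g x) -> 0 <= sumL l g.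
Proof. induction l; simpl; intros H; [lra|]. assert (0 <= g a) by auto. assert (0 <= sumL l g) by auto. lra. Qed.

Definition SA (w : nat -> bool) (n : nat) : list Z := map (fun i => Z.of_nat (S i)) (filter w (seq 0 n)).

Lemma SA_rep w n m : INR (rep_count (SA w n) m) =
  sumR n (fun i => b2R (w i) * sumR n (fun j => b2R (w j) * b2R (Z.eqb (Z.of_nat (S i) + Z.of_nat (S j)) m))).
Proof.
  rewrite rep_count_sumL. unfold SA. rewrite sumL_map, sumL_filter, sumL_seq.
  apply sumR_ext; intros i _. f_equal. rewrite sumL_map, sumL_filter, sumL_seq. reflexivity.
Qed.

Lemma SA_len w n : INR (length (SA w n)) = sumR n (fun i => b2R (w i)).
Proof.
  unfold SA. rewrite length_map, length_filter_sumL, sumL_seq. reflexivity.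
Qed.

Lemma SA_nodup w n : NoDup (SA w n).
Proof.
  unfold SA. apply NoDup_map_NoDup_ForallPairs.
  - intros x y _ _ H. lia.
  - apply NoDup_filter, seq_NoDup.
Qed.

Lemma SA_range w n s : In s (SA w n) -> (1 <= s <= Z.of_nat n)%Z.
Proof.
  unfold SA. rewrite in_map_iff. intros [i [<- Hi]]. rewrite filter_In, in_seq in Hi. lia.
Qed.


Ltac bdestr :=
  repeat match goal with
  | |- context [Nat.ltb ?a ?b] => destruct (Nat.ltb_spec a b)
  | |- context [Nat.leb ?a ?b] => destruct (Nat.leb_spec a b)
  | |- context [Nat.eqb ?a ?b] => destruct (Nat.eqb_spec a b)
  | |- context [Z.eqb ?a ?b] => destruct (Z.eqb_spec a b)
  end.

Lemma sumR_single n c v : sumR n (fun j => b2R (Nat.eqb j c) * v j) = b2R (Nat.ltb c n) * v c.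
Proof.
  induction n; simpl.
  - unfold b2R; bdestr; try lia; lra.
  - rewrite IHn. unfold b2R; bdestr; subst; try lia; lra.
Qed.

Lemma sumR_cut n a f : (forall i, (a <= i)%nat -> f i = 0) ->
  sumR n f = sumR a (fun i => b2R (Nat.ltb i n) * f i).
Proof.
  intros H. destruct (Nat.le_gt_cases n a).
  - replace a with (n + (a - n))%nat by lia. rewrite sumR_add.
    rewrite (sumR_ext (a - n) _ (fun _ => 0)).
    2:{ intros i Hi. unfold b2R; bdestr; try lia; lra. }
    rewrite sumR_const0, Rplus_0_r. apply sumR_ext. intros i Hi. unfold b2R; bdestr; try lia; lra.
  - replace n with (a + (n - a))%nat by lia. rewrite sumR_add.
    rewrite (sumR_ext (n - a) _ (fun _ => 0)).
    2:{ intros i Hi. apply H; lia. }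
    rewrite sumR_const0, Rplus_0_r. apply sumR_ext. intros i Hi. unfold b2R; bdestr; try lia; lra.
Qed.

Definition Aterm (n : nat) (w : nat -> bool) (K i : nat) : R :=
  if andb (Nat.ltb (2 * i)%nat K) (Nat.ltb (K - i)%nat n) then b2R (w i) * b2R (w (K - i)%nat) else 0.

Definition AK n w K := sumR n (Aterm n w K).

Lemma inner_eq n w m i : (2 <= m)%Z ->
  sumR n (fun j => b2R (w j) * b2R (Z.eqb (Z.of_nat (S i) + Z.of_nat (S j)) m))
  = b2R (Nat.leb i (Z.to_nat (m - 2))) * (b2R (Nat.ltb (Z.to_nat (m - 2) - i)%nat n) * b2R (w (Z.to_nat (m - 2) - i)%nat)).
Proof.
  intros Hm. set (K := Z.to_nat (m - 2)).
  rewrite (sumR_ext n _ (fun j => b2R (Nat.eqb j (K - i)%nat) * (b2R (Nat.leb i K) * b2R (w j)))).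
  - rewrite sumR_single. ring.
  - intros j _. unfold b2R. destruct (w j); bdestr; subst K; try lia; lra.
Qed.

Lemma rep_zero n w m : (m < 2)%Z ->
  sumR n (fun i => b2R (w i) * sumR n (fun j => b2R (w j) * b2R (Z.eqb (Z.of_nat (S i) + Z.of_nat (S j)) m))) = 0.
Proof.
  intros Hm. rewrite <- (sumR_const0 n). apply sumR_ext. intros i _.
  rewrite (sumR_ext n _ (fun _ => 0)). rewrite sumR_const0; ring.
  intros j _. unfold b2R; bdestr; try lia; lra.
Qed.

Lemma b2R_le1 b : b2R b <= 1.
Proof. destruct b; simpl; lra. Qed.
Lemma b2R_ge0 b : 0 <= b2R b.
Proof. destruct b; simpl; lra. Qed.

Lemma rep_le_A n w m : (2 <= m)%Z ->
  sumR n (fun i => b2R (w i) * sumR n (fun j => b2R (w j) * b2R (Z.eqb (Z.of_nat (S i) + Z.of_nat (S j)) m)))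
  <= 2 * AK n w (Z.to_nat (m - 2)) + 1.
Proof.
  intros Hm. rewrite (sumR_ext n _ (fun i => b2R (w i) * (b2R (Nat.leb i (Z.to_nat (m - 2))) * (b2R (Nat.ltb (Z.to_nat (m - 2) - i)%nat n) * b2R (w (Z.to_nat (m - 2) - i)%nat))))).
  2:{ intros i _. rewrite inner_eq; auto. }
  set (K := Z.to_nat (m - 2)).
  set (g := fun i => b2R (w i) * (b2R (Nat.leb i K) * (b2R (Nat.ltb (K - i)%nat n) * b2R (w (K - i)%nat)))).
  change (sumR n g <= 2 * AK n w K + 1).
  rewrite (sumR_ext n g (fun i => (g i * b2R (Nat.ltb (2 * i)%nat K) + g i * b2R (Nat.eqb (2 * i)%nat K)) + g i * b2R (Nat.ltb K (2 * i)%nat))).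
  2:{ intros i _. unfold b2R; bdestr; try lia; lra. }
  rewrite !sumR_plus.
  assert (P1 : sumR n (fun i => g i * b2R (Nat.ltb (2 * i)%nat K)) = AK n w K).
  { unfold AK. apply sumR_ext. intros i _. unfold g, Aterm, b2R.
    destruct (w i), (w (K - i)%nat); bdestr; simpl; try lia; lra. }
  assert (P2 : sumR n (fun i => g i * b2R (Nat.eqb (2 * i)%nat K)) <= 1).
  { apply Rle_trans with (sumR n (fun i => b2R (Nat.eqb i (Nat.div K 2)) * 1)).
    - apply sumR_le. intros i _. unfold g.
      assert (E: Nat.eqb (2 * i)%nat K = true -> Nat.eqb i (Nat.div K 2) = true).
      { intros H. apply Nat.eqb_eq in H. apply Nat.eqb_eq. rewrite <- H. rewrite Nat.mul_comm. rewrite Nat.div_mul; lia. }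
      destruct (Nat.eqb (2 * i)%nat K) eqn:Heq.
      + rewrite (E eq_refl). unfold b2R; destruct (w i), (w (K - i)%nat); bdestr; lra.
      + simpl b2R at 2. rewrite Rmult_0_r. destruct (Nat.eqb i (K / 2)); simpl; lra.
    - rewrite sumR_single. rewrite Rmult_1_r. apply b2R_le1. }
  assert (P3 : sumR n (fun i => g i * b2R (Nat.ltb K (2 * i)%nat)) = AK n w K).
  { rewrite (sumR_cut n (S K)).
    2:{ intros i Hi. unfold g, b2R; bdestr; try lia; lra. }
    rewrite sumR_rev.
    unfold AK. rewrite (sumR_cut n (S K) (Aterm n w K)).
    2:{ intros i Hi. unfold Aterm; bdestr; simpl; try lia; lra. }
    apply sumR_ext. intros i Hi. unfold g, Aterm.
    replace (K - (K - i))%nat with i by lia.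
    unfold b2R; destruct (w i), (w (K - i)%nat); bdestr; simpl; try lia; lra. }
  rewrite P1, P3. lra.
Qed.


Lemma pair_sum_bound n s K :
  sumR n (fun i => if andb (Nat.ltb (2 * i)%nat K) (Nat.ltb (K - i)%nat n)
                   then cb (i + s + 1)%nat * cb (K - i + s + 1)%nat else 0) <= / 2.
Proof.
  set (q := fun i => cb (i + s + 1)%nat * cb (K - i + s + 1)%nat).
  assert (qpos : forall i, 0 <= q i) by (intros; unfold q; pose proof (cb_pos (i+s+1)); pose proof (cb_pos (K-i+s+1)); nra).
  set (B := sumR (S K) (fun i => b2R (Nat.ltb (2 * i)%nat K) * q i)).
  assert (H1 : sumR n (fun i => if andb (Nat.ltb (2 * i)%nat K) (Nat.ltb (K - i)%nat n) then q i else 0) <= B).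
  { rewrite (sumR_cut n (S K)).
    2:{ intros i Hi. bdestr; simpl; try lia; lra. }
    apply sumR_le. intros i Hi. pose proof (qpos i). unfold b2R. bdestr; simpl; lra. }
  assert (H2 : B = sumR (S K) (fun i => b2R (Nat.ltb K (2 * i)%nat) * q i)).
  { unfold B. rewrite sumR_rev. apply sumR_ext. intros i Hi.
    unfold q. replace (K - (K - i))%nat with i by lia. unfold b2R; bdestr; try lia; ring. }
  assert (H3 : 2 * B <= sumR (S K) q).
  { replace (2 * B) with (B + B) by ring. rewrite H2 at 2. unfold B. rewrite <- sumR_plus.
    apply sumR_le. intros i _. pose proof (qpos i). unfold b2R; bdestr; try lia; lra. }
  assert (H4 : sumR (S K) q <= 1).
  { rewrite <- (U_one (K + 2 * s + 2)). unfold U.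
    replace (S (K + 2 * s + 2)) with ((s + 1) + (K + s + 2))%nat by lia.
    rewrite sumR_add. cbv beta.
    assert (0 <= sumR (s + 1) (fun i => cb i * cb (K + 2 * s + 2 - i)%nat)).
    { apply sumR_nonneg. intros i _. pose proof (cb_pos i). pose proof (cb_pos (K + 2 * s + 2 - i)). nra. }
    assert (sumR (S K) q <= sumR (K + s + 2) (fun i => cb (s + 1 + i)%nat * cb (K + 2 * s + 2 - (s + 1 + i))%nat)).
    { apply Rle_trans with (sumR (S K) (fun i => cb (s + 1 + i)%nat * cb (K + 2 * s + 2 - (s + 1 + i))%nat)).
      - right. apply sumR_ext. intros i Hi. unfold q. f_equal; f_equal; lia.
      - apply sumR_mono_len; [lia|]. intros i _. pose proof (cb_pos (s+1+i)). pose proof (cb_pos (K + 2 * s + 2 - (s + 1 + i))). nra. }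
    lra. }
  apply Rle_trans with B; [exact H1 | lra].
Qed.


Lemma exp_le_inv l : 0 <= l < 1 -> exp l <= / (1 - l).
Proof.
  intros H. pose proof (exp_ineq1_le (- l)).
  pose proof (exp_pos (-l)). rewrite exp_Ropp in H0, H1.
  pose proof (exp_pos l).
  apply Rmult_le_reg_r with (1 - l); [lra|]. rewrite Rinv_l by lra.
  apply Rmult_le_reg_l with (/ exp l); [apply Rinv_0_lt_compat; lra|].
  rewrite <- Rmult_assoc, Rinv_l by lra. lra.
Qed.

Lemma exp_ge_sq l : 0 <= l -> (1 + l / 2) * (1 + l / 2) <= exp l.
Proof.
  intros Hl.
  replace (exp l) with (exp (l/2) * exp (l/2)) by (rewrite <- exp_plus; f_equal; lra).
  pose proof (exp_ineq1_le (l/2)).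
  apply Rmult_le_compat; lra.
Qed.

Lemma exp_neg_le l : 0 <= l -> exp (- l) <= 1 - l + 3 / 4 * (l * l).
Proof.
  intros H. rewrite exp_Ropp. pose proof (exp_ge_sq l H). pose proof (exp_pos l).
  apply Rmult_le_reg_r with (exp l); [lra|]. rewrite Rinv_l by lra.
  assert (0 < 1 - l + 3/4 * (l*l)) by nra.
  apply Rle_trans with ((1 - l + 3 / 4 * (l * l)) * ((1 + l/2) * (1 + l/2))).
  - nra.
  - apply Rmult_le_compat_l; lra.
Qed.

Lemma upper_tail_exponent M t L : 0 < M -> 0 < t ->
  (t <= 2 * M -> 3 * L <= t * t / (8 * M)) -> (2 * M < t -> 3 * L <= t / 4) ->
  exists l, 0 < l /\ (exp l - 1) * M - l * (M + t) <= - (3 * L).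
Proof.
  intros HM Ht H1 H2.
  destruct (Rle_dec t (2 * M)) as [Hc|Hc].
  - exists (t / (4 * M)). assert (0 < t / (4 * M)) by (apply Rdiv_lt_0_compat; lra).
    assert (t / (4 * M) <= / 2) by (apply Rmult_le_reg_r with (4 * M); [lra|]; unfold Rdiv; rewrite Rmult_assoc, Rinv_l; lra).
    split; auto. set (l := t / (4 * M)) in *.
    pose proof (exp_le_inv l ltac:(lra)).
    assert (exp l - 1 <= l + 2 * (l * l)).
    { apply Rle_trans with (/ (1 - l) - 1); [lra|].
      apply Rmult_le_reg_r with (1 - l); [lra|].
      unfold Rminus at 1. rewrite Rmult_plus_distr_r, Rinv_l by lra. nra. }
    specialize (H1 Hc).
    assert (E: (l + 2 * (l * l)) * M - l * (M + t) = - (t * t / (8 * M))).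
    { unfold l. field. lra. }
    assert ((exp l - 1) * M <= (l + 2 * (l * l)) * M) by (apply Rmult_le_compat_r; lra).
    lra.
  - exists (/ 2). split; [lra|].
    pose proof (exp_le_inv (/2) ltac:(lra)).
    replace (/ (1 - / 2)) with 2 in H by field.
    specialize (H2 ltac:(lra)).
    assert ((exp (/2) - 1) * M <= 1 * M) by (apply Rmult_le_compat_r; lra).
    lra.
Qed.

Lemma lower_tail_exponent mu u : 0 < mu -> 0 < u ->
  let l := 2 * u / (3 * mu) in
  0 < l /\ l * mu - l * u - mu * (1 - exp (- l)) <= - (u * u / (3 * mu)).
Proof.
  intros Hm Hu l. assert (0 < l) by (unfold l; apply Rdiv_lt_0_compat; lra).
  split; auto. pose proof (exp_neg_le l ltac:(lra)).
  assert (mu * (1 - exp (- l)) >= mu * (l - 3/4 * (l * l))) by (apply Rle_ge, Rmult_le_compat_l; lra).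
  assert (E : l * mu - l * u - mu * (l - 3/4 * (l * l)) = - (u * u / (3 * mu))) by (unfold l; field; lra).
  lra.
Qed.


Section MGF.
Variable p : nat -> R.
Hypothesis hp : forall i, 0 <= p i <= 1.
Variable n : nat.

Lemma Ex_b2R i : (i < n)%nat -> Ex p n (fun w => b2R (w i)) = p i.
Proof. intros H. unfold b2R. rewrite Ex_coord; auto. ring. Qed.

Lemma mgf_pair l i j : (i < n)%nat -> (j < n)%nat -> i <> j ->
  Ex p n (fun w => exp (l * (b2R (w i) * b2R (w j)))) = 1 + (exp l - 1) * (p i * p j).
Proof.
  intros Hi Hj Hij.
  rewrite (Ex_ext p n _ (fun w => 1 + (exp l - 1) * (b2R (w i) * b2R (w j)))).
  2:{ intros w. unfold b2R; destruct (w i), (w j); rewrite ?Rmult_1_r, ?Rmult_0_r, ?exp_0; ring. }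
  rewrite Ex_plus, Ex_const, Ex_scal.
  rewrite (Ex_indep p n (fun k => Nat.eqb k i) (fun k => Nat.eqb k j)).
  - rewrite !Ex_b2R; auto.
  - intros w w' H. rewrite (H i); auto. apply Nat.eqb_refl.
  - intros w w' H. rewrite (H j); auto. apply Nat.eqb_refl.
  - intros k Hk. apply Nat.eqb_eq in Hk. subst. apply Nat.eqb_neq; auto.
Qed.

Definition active (K i : nat) : bool := andb (Nat.ltb (2 * i)%nat K) (Nat.ltb (K - i)%nat n).

Lemma mgf_A l K : 0 <= l ->
  Ex p n (fun w => exp (l * AK n w K)) <=
  exp ((exp l - 1) * sumR n (fun i => if active K i then p i * p (K - i)%nat else 0)).
Proof.
  intros Hl.
  set (f := fun i (w : nat -> bool) => if active K i then exp (l * (b2R (w i) * b2R (w (K - i)%nat))) else 1).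
  rewrite (Ex_ext p n _ (fun w => prodR n (fun h => f h w))).
  2:{ intros w. unfold AK. rewrite <- sumR_scal, exp_sumR. apply prodR_ext. intros h _.
      unfold f, Aterm, active. destruct (andb _ _); auto. rewrite Rmult_0_r, exp_0; auto. }
  rewrite (Ex_prod p n n f (fun h j => orb (Nat.ltb j h) (andb (Nat.ltb (K - h)%nat j) (Nat.leb j K)))
                                 (fun h j => andb (active K h) (orb (Nat.eqb j h) (Nat.eqb j (K - h)%nat)))).
  - rewrite <- sumR_scal, exp_sumR. apply prodR_le. intros i Hi.
    unfold f. destruct (active K i) eqn:Ea.
    + unfold active in Ea. apply andb_prop in Ea. destruct Ea as [E1 E2].
      apply Nat.ltb_lt in E1. apply Nat.ltb_lt in E2.
      rewrite mgf_pair; try lia.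
      split.
      * pose proof (exp_pos l). pose proof (exp_ineq1_le l). destruct (hp i), (hp (K - i)%nat).
        assert (0 <= p i * p (K - i)%nat) by nra. nra.
      * apply exp_ineq1_le.
    + rewrite Ex_const, Rmult_0_r, exp_0. lra.
  - intros h w w' Hw. unfold f. destruct (active K h) eqn:Ea; auto.
    rewrite (Hw h), (Hw (K - h)%nat); auto; simpl; rewrite ?Nat.eqb_refl; simpl; rewrite ?Bool.orb_true_r; auto.
  - intros h j Hj. apply andb_prop in Hj. destruct Hj as [Ea Hj]. unfold active in Ea.
    apply andb_prop in Ea. destruct Ea as [E1 E2]. apply Nat.ltb_lt in E1.
    apply Bool.orb_prop in Hj. destruct Hj as [Hj|Hj]; apply Nat.eqb_eq in Hj; subst;
    apply Bool.orb_false_intro; bdestr; simpl; try lia; auto.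
  - intros h j Hj. apply Bool.orb_true_intro. destruct Hj as [Hj|Hj].
    + apply Bool.orb_prop in Hj. destruct Hj as [Hj|Hj].
      * left. apply Nat.ltb_lt in Hj. apply Nat.ltb_lt. lia.
      * right. apply andb_prop in Hj. destruct Hj as [H1 H2]. apply Nat.ltb_lt in H1. apply Nat.leb_le in H2.
        apply andb_true_intro. split; [apply Nat.ltb_lt|apply Nat.leb_le]; lia.
    + apply andb_prop in Hj. destruct Hj as [Ea Hj]. unfold active in Ea.
      apply andb_prop in Ea. destruct Ea as [E1 E2]. apply Nat.ltb_lt in E1.
      apply Bool.orb_prop in Hj. destruct Hj as [Hj|Hj]; apply Nat.eqb_eq in Hj; subst.
      * left. apply Nat.ltb_lt. lia.
      * right. apply andb_true_intro. split; [apply Nat.ltb_lt|apply Nat.leb_le]; lia.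
Qed.

Definition Xs (w : nat -> bool) := sumR n (fun i => b2R (w i)).

Lemma mgf_X l : 0 <= l ->
  Ex p n (fun w => exp (- l * Xs w)) <= exp (- (1 - exp (- l)) * sumR n p).
Proof.
  intros Hl.
  set (f := fun i (w : nat -> bool) => exp (- l * b2R (w i))).
  rewrite (Ex_ext p n _ (fun w => prodR n (fun h => f h w))).
  2:{ intros w. unfold Xs. rewrite <- sumR_scal, exp_sumR. reflexivity. }
  rewrite (Ex_prod p n n f (fun h j => Nat.ltb j h) (fun h j => Nat.eqb j h)).
  - rewrite <- sumR_scal, exp_sumR. apply prodR_le. intros i Hi.
    unfold f. rewrite (Ex_ext p n _ (fun w => if w i then exp (- l) else 1)).
    2:{ intros w; unfold b2R; destruct (w i); rewrite ?Rmult_1_r, ?Rmult_0_r, ?exp_0; auto. }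
    rewrite Ex_coord; auto. destruct (hp i).
    pose proof (exp_pos (-l)).
    assert (exp (- l) <= 1) by (rewrite <- exp_0; apply exp_le_3 || (destruct (Req_dec l 0); [subst; rewrite Ropp_0; lra| left; apply exp_increasing; lra])).
    split; [nra|]. pose proof (exp_ineq1_le (- (1 - exp (- l)) * p i)). nra.
  - intros h w w' Hw. unfold f. rewrite (Hw h); auto. apply Nat.eqb_refl.
  - intros h j Hj. apply Nat.eqb_eq in Hj. subst. apply Nat.ltb_ge. lia.
  - intros h j [Hj|Hj].
    + apply Nat.ltb_lt in Hj. apply Nat.ltb_lt. lia.
    + apply Nat.eqb_eq in Hj. apply Nat.ltb_lt. lia.
Qed.

End MGF.



Lemma PI_gt3 : 3 < PI.
Proof. pose proof PI2_3_2. lra. Qed.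

Lemma sqrt_ge_of_sq a b : 0 <= a -> a * a <= b -> a <= sqrt b.
Proof. intros Ha H. rewrite <- (sqrt_square a Ha). apply sqrt_le_1_alt. exact H. Qed.

Lemma sqrt_le_of_sq a b : 0 <= a -> 0 <= b -> b <= a * a -> sqrt b <= a.
Proof. intros Ha Hb H. rewrite <- (sqrt_square a Ha). apply sqrt_le_1_alt. exact H. Qed.

Lemma sumR_term_le N f j : (forall i, (i < N)%nat -> 0 <= f i) -> (j < N)%nat -> f j <= sumR N f.
Proof.
  induction N; intros H Hj; [lia|]. simpl.
  destruct (Nat.eq_dec j N).
  - subst. assert (0 <= sumR N f) by (apply sumR_nonneg; intros; apply H; lia). lra.
  - assert (f j <= sumR N f) by (apply IHN; [intros; apply H; lia| lia]). assert (0 <= f N) by (apply H; lia). lra.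
Qed.

Lemma AK_big n w K : (2 * n <= K)%nat -> AK n w K = 0.
Proof.
  intros H. unfold AK. rewrite <- (sumR_const0 n). apply sumR_ext. intros i Hi.
  unfold Aterm. bdestr; simpl; try lia; auto.
Qed.

Section CaseA.
Variable gamma : R.
Variable n : nat.
Hypothesis Hg : PI <= gamma.
Hypothesis Hn : gamma <= INR n.
Hypothesis HL : 9 * ln (INR n) <= gamma.

Let L := ln (INR n).

Lemma n_ge4 : (4 <= n)%nat.
Proof.
  pose proof PI_gt3. assert (3 < INR n) by lra.
  destruct (le_lt_dec 4 n); auto. exfalso.
  assert (INR n <= INR 3) by (apply le_INR; lia). simpl in H1. lra.
Qed.

Lemma L_gt1 : 1 < L.
Proof.
  unfold L. pose proof n_ge4. assert (4 <= INR n) by (replace 4 with (INR 4) by (simpl; lra); apply le_INR; auto).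
  pose proof exp_le_3. rewrite <- (ln_exp 1). apply ln_increasing. apply exp_pos. lra.
Qed.

Let s := Z.to_nat (up gamma).

Lemma s_bounds : gamma < INR s <= gamma + 1.
Proof.
  unfold s. destruct (archimed gamma) as [H1 H2].
  assert (0 < IZR (up gamma)) by (pose proof PI_gt3; lra).
  assert (0 <= up gamma)%Z by (apply le_IZR; lra).
  rewrite INR_IZR_INZ, Z2Nat.id by auto. lra.
Qed.

Let p := fun i => sqrt gamma * cb (i + s + 1).

Lemma gpos : 0 < gamma.
Proof. pose proof PI_gt3. lra. Qed.

Lemma sqg : sqrt gamma * sqrt gamma = gamma.
Proof. apply sqrt_sqrt. pose proof gpos; lra. Qed.

Lemma sqg_mul a b : sqrt gamma * a * (sqrt gamma * b) = gamma * (a * b).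
Proof. replace (sqrt gamma * a * (sqrt gamma * b)) with ((sqrt gamma * sqrt gamma) * (a * b)) by ring. rewrite sqg. ring. Qed.

Lemma hp : forall i, 0 <= p i <= 1.
Proof.
  intros i. unfold p. pose proof (cb_pos (i + s + 1)). pose proof (sqrt_pos gamma).
  pose proof (cb_sq (i + s + 1)). pose proof s_bounds. pose proof sqg.
  rewrite !plus_INR in H1. simpl (INR 1) in H1. pose proof (pos_INR i).
  assert (0 <= sqrt gamma * cb (i + s + 1)) by nra. split; auto.
  assert ((sqrt gamma * cb (i + s + 1)) * (sqrt gamma * cb (i + s + 1)) <= 1).
  { replace ((sqrt gamma * cb (i + s + 1)) * (sqrt gamma * cb (i + s + 1))) with (gamma * (cb (i+s+1) * cb (i+s+1))) by (rewrite sqg_mul; ring).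
    assert (0 <= cb (i+s+1) * cb (i+s+1)) by nra. nra. }
  nra.
Qed.

Let M := gamma / 2.
Let t := 4 * sqrt (gamma * L).

Lemma sqrt_gL : 3 * L <= sqrt (gamma * L).
Proof.
  pose proof L_gt1. apply sqrt_ge_of_sq; [lra|]. unfold L in *. nra.
Qed.

Lemma pair_bound K : sumR n (fun i => if active n K i then p i * p (K - i)%nat else 0) <= M.
Proof.
  apply Rle_trans with (gamma * sumR n (fun i => if andb (Nat.ltb (2 * i)%nat K) (Nat.ltb (K - i)%nat n)
                   then cb (i + s + 1)%nat * cb (K - i + s + 1)%nat else 0)).
  - rewrite <- sumR_scal. right. apply sumR_ext. intros i _. unfold active.
    destruct (andb _ _); [|ring]. unfold p. rewrite sqg_mul. reflexivity.
  - pose proof (pair_sum_bound n s K). pose proof gpos. unfold M.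
    apply Rmult_le_compat_l with (r := gamma) in H; lra.
Qed.

Definition mu := sumR n p.

Lemma mu_split : mu = sqrt gamma * (sumR (s + 1 + n) cb - sumR (s + 1) cb).
Proof.
  unfold mu, p. transitivity (sqrt gamma * sumR n (fun i => cb (s+1+i)%nat)).
  - rewrite <- sumR_scal. apply sumR_ext; intros; f_equal; f_equal; lia.
  - rewrite sumR_add. ring.
Qed.

Lemma mu_lower : 2 * sqrt (gamma * INR n / PI) - 2 * gamma <= mu.
Proof.
  rewrite mu_split, !cb_sum.
  set (N := (s + 1 + n)%nat). pose proof s_bounds. pose proof gpos. pose proof PI_gt3.
  assert (HN : INR N = INR s + 1 + INR n) by (unfold N; rewrite !plus_INR; simpl; ring).
  assert (Hs1 : INR (s + 1) = INR s + 1) by (rewrite plus_INR; simpl; ring).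
  pose proof (pos_INR n). pose proof (pos_INR s).
  set (a := 2 * INR N * cb N).
  assert (A : 2 * sqrt (INR n / PI) <= a).
  { pose proof (WallisM.wallis N) as Wn. pose proof (cb_pos N).
    assert (0 <= a) by (unfold a; nra).
    replace (2 * sqrt (INR n / PI)) with (sqrt (4 * (INR n / PI))).
    2:{ rewrite sqrt_mult by (first [lra | apply Rmult_le_pos; [lra | left; apply Rinv_0_lt_compat; lra]]).
        replace 4 with (2 * 2) by ring. rewrite sqrt_square by lra. ring. }
    apply sqrt_le_of_sq; auto.
    + apply Rmult_le_pos; [lra|]. apply Rmult_le_pos; [lra|left; apply Rinv_0_lt_compat; lra].
    + set (X := PI * (cb N * cb N)).
      assert (HX : 2 <= X * (2 * INR N + 1)) by (unfold X; lra).
      assert (HX0 : 0 <= X) by (unfold X; nra).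
      assert (H2N : INR n * (2 * INR N + 1) <= 2 * INR N * INR N) by (rewrite HN; nra).
      assert (INR n <= INR N * INR N * X) by nra.
      apply Rmult_le_reg_l with PI; [lra|].
      replace (PI * (4 * (INR n / PI))) with (4 * INR n) by (field; lra).
      replace (PI * (a * a)) with (4 * (INR N * INR N * X)) by (unfold a, X; ring).
      lra. }
  set (b := 2 * INR (s + 1) * cb (s + 1)).
  assert (B : sqrt gamma * b <= 2 * gamma).
  { pose proof (cb_sq (s + 1)) as Cs. pose proof (cb_pos (s + 1)). rewrite Hs1 in Cs.
    assert (0 <= b) by (unfold b; rewrite Hs1; nra).
    assert (Hb2 : b * b <= 4 * gamma).
    { unfold b. rewrite Hs1.
      set (c := cb (s + 1)) in *. set (x := INR s) in *.
      assert ((x + 1) * (x + 1) * (c * c) * (2 * (x + 1) + 1) <= (x + 1) * (x + 1)) by nra.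
      assert ((x + 1) * (x + 1) * (c * c) <= (x + 1) / 2).
      { apply Rmult_le_reg_r with (2 * (x + 1) + 1); [lra|].
        apply Rle_trans with ((x+1)*(x+1)); [lra|]. unfold Rdiv. nra. }
      nra. }
    pose proof (sqrt_pos gamma). pose proof sqg.
    assert ((sqrt gamma * b) * (sqrt gamma * b) <= (2 * gamma) * (2 * gamma)).
    { replace ((sqrt gamma * b) * (sqrt gamma * b)) with (gamma * (b * b)) by (rewrite <- sqg_mul; ring). nra. }
    nra. }
  assert (E : sqrt (gamma * INR n / PI) = sqrt gamma * sqrt (INR n / PI)).
  { rewrite <- sqrt_mult; [|lra|apply Rmult_le_pos; [lra|left; apply Rinv_0_lt_compat; lra]]. f_equal. unfold Rdiv. ring. }
  rewrite E. pose proof (sqrt_pos gamma).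
  fold a. fold b.
  assert (sqrt gamma * (2 * sqrt (INR n / PI)) <= sqrt gamma * a) by (apply Rmult_le_compat_l; lra).
  nra.
Qed.


Lemma mu_upper : mu * mu <= 6 * gamma * INR n.
Proof.
  pose proof (mu_split) as Hm. rewrite !cb_sum in Hm.
  set (N := (s + 1 + n)%nat) in *. pose proof s_bounds. pose proof gpos.
  assert (HN : INR N = INR s + 1 + INR n) by (unfold N; rewrite !plus_INR; simpl; ring).
  pose proof (pos_INR n). pose proof (pos_INR s). pose proof (cb_pos N). pose proof (cb_pos (s+1)).
  pose proof (pos_INR (s+1)). pose proof (sqrt_pos gamma). pose proof n_ge4.
  assert (4 <= INR n) by (replace 4 with (INR 4) by (simpl; lra); apply le_INR; auto).
  set (a := 2 * INR N * cb N) in *.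
  assert (Ha : a * a <= 2 * INR N).
  { pose proof (cb_sq N). unfold a.
    assert (INR N * INR N * (cb N * cb N) * (2 * INR N + 1) <= INR N * INR N) by nra.
    nra. }
  assert (0 <= 2 * INR (s + 1) * cb (s + 1)) by nra.
  assert (0 <= mu) by (unfold mu; apply sumR_nonneg; intros; apply hp).
  assert (mu <= sqrt gamma * a) by nra.
  assert (mu * mu <= gamma * (a * a)).
  { apply Rle_trans with ((sqrt gamma * a) * (sqrt gamma * a)). nra.
    right. replace ((sqrt gamma * a) * (sqrt gamma * a)) with ((sqrt gamma * sqrt gamma) * (a * a)) by ring. rewrite sqg. ring. }
  nra.
Qed.

Lemma mu_pos : 0 < mu.
Proof.
  pose proof n_ge4. apply Rlt_le_trans with (p 0%nat).
  - unfold p. pose proof (cb_pos (0 + s + 1)). pose proof gpos. apply Rmult_lt_0_compat; auto. apply sqrt_lt_R0; auto.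
  - unfold mu. apply sumR_term_le; [intros; apply hp| lia].
Qed.

Lemma sumR_constc N c : sumR N (fun _ => c) = INR N * c.
Proof. induction N; simpl sumR; [simpl; ring|]. rewrite IHN, S_INR. ring. Qed.

Lemma exp_lt1 x : exp x < 1 -> x < 0.
Proof. intros H. destruct (Rlt_le_dec x 0); auto. pose proof (exp_ineq1_le x). lra. Qed.

Theorem caseA_main : exists g S, Rabs (g - gamma) <= 9 * sqrt (gamma * L) /\ BstarSet g S /\
  (forall s, In s S -> (1 <= s <= Z.of_nat n)%Z) /\
  INR (length S) >= 2 * sqrt (gamma * INR n / PI) - 3 * (gamma + Rpower (gamma * INR n) (1/4)).
Proof.
  pose proof gpos as G0. pose proof L_gt1 as L1. pose proof n_ge4 as N4.
  assert (N4R : 4 <= INR n) by (replace 4 with (INR 4) by (simpl; lra); apply le_INR; auto).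
  assert (HM : 0 < M) by (unfold M; lra).
  assert (sgL : 0 < sqrt (gamma * L)) by (apply sqrt_lt_R0; nra).
  assert (Ht : 0 < t) by (unfold t; lra).
  destruct (upper_tail_exponent M t L HM Ht) as [l [Hl Hexp]].
  { intros _. unfold t, M. replace (4 * sqrt (gamma * L) * (4 * sqrt (gamma * L))) with (16 * (sqrt (gamma * L) * sqrt (gamma * L))) by ring.
    rewrite sqrt_sqrt by nra. replace (16 * (gamma * L) / (8 * (gamma / 2))) with (4 * L) by (field; lra). lra. }
  { intros _. pose proof sqrt_gL. unfold t. lra. }
  set (u := 3 * Rpower (gamma * INR n) (1/4)).
  assert (Hu : 0 < u) by (unfold u, Rpower; pose proof (exp_pos ((1/4) * ln (gamma * INR n))); lra).
  assert (Hu2 : u * u = 9 * sqrt (gamma * INR n)).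
  { unfold u. replace (3 * Rpower (gamma * INR n) (1 / 4) * (3 * Rpower (gamma * INR n) (1 / 4)))
      with (9 * (Rpower (gamma * INR n) (1 / 4) * Rpower (gamma * INR n) (1 / 4))) by ring.
    rewrite <- Rpower_plus. replace (1/4 + 1/4) with (/ 2) by field. rewrite Rpower_sqrt; [ring|nra]. }
  pose proof mu_pos as Mu0.
  destruct (lower_tail_exponent mu u Mu0 Hu) as [Hl' Hexp'].
  set (l' := 2 * u / (3 * mu)) in *.
  assert (Hq : 1 <= u * u / (3 * mu)).
  { pose proof mu_upper. rewrite Hu2.
    assert (mu <= 3 * sqrt (gamma * INR n)).
    { apply Rle_trans with (sqrt (6 * gamma * INR n)).
      - rewrite <- (sqrt_square mu) by lra. apply sqrt_le_1_alt; lra.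
      - apply sqrt_le_of_sq; [pose proof (sqrt_pos (gamma * INR n)); lra | nra |].
        replace (3 * sqrt (gamma * INR n) * (3 * sqrt (gamma * INR n))) with (9 * (sqrt (gamma * INR n) * sqrt (gamma * INR n))) by ring.
        rewrite sqrt_sqrt by nra. nra. }
    apply Rmult_le_reg_r with (3 * mu); [lra|]. unfold Rdiv. rewrite Rmult_assoc, Rinv_l by lra. lra. }
  set (Phi := fun w => sumR (2 * n) (fun K => exp (l * AK n w K) * exp (- (l * (M + t))))
                      + exp (- l' * Xs n w) * exp (l' * (mu - u))).
  assert (HE : Ex p n Phi < 1).
  { unfold Phi. rewrite Ex_plus, (Ex_sumR p n (2 * n) (fun K w => exp (l * AK n w K) * exp (- (l * (M + t))))).
    assert (T1 : forall K, Ex p n (fun w => exp (l * AK n w K) * exp (- (l * (M + t)))) <= exp (- (3 * L))).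
    { intros K. rewrite (Ex_ext p n _ (fun w => exp (- (l * (M + t))) * exp (l * AK n w K))) by (intros; ring).
      rewrite Ex_scal. pose proof (mgf_A p hp n l K ltac:(lra)).
      pose proof (pair_bound K). pose proof (exp_ineq1_le l).
      apply Rle_trans with (exp (- (l * (M + t))) * exp ((exp l - 1) * M)).
      - apply Rmult_le_compat_l; [left; apply exp_pos|]. eapply Rle_trans; [exact H|].
        apply exp_le_3 || (destruct (Rle_lt_or_eq_dec _ _ (Rmult_le_compat_l (exp l - 1) _ _ ltac:(lra) H0)) as [Hlt|Heq];
          [left; apply exp_increasing; exact Hlt | right; rewrite Heq; reflexivity]).
      - rewrite <- exp_plus. destruct (Rle_lt_or_eq_dec _ _ (ltac:(lra) : - (l * (M + t)) + (exp l - 1) * M <= - (3 * L))) as [Hlt|Heq].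
        left; apply exp_increasing; exact Hlt. right; rewrite Heq; reflexivity. }
    assert (T2 : Ex p n (fun w => exp (- l' * Xs n w) * exp (l' * (mu - u))) <= / 2).
    { rewrite (Ex_ext p n _ (fun w => exp (l' * (mu - u)) * exp (- l' * Xs n w))) by (intros; ring).
      rewrite Ex_scal. pose proof (mgf_X p hp n l' ltac:(lra)).
      apply Rle_trans with (exp (l' * (mu - u)) * exp (- (1 - exp (- l')) * mu)).
      - apply Rmult_le_compat_l; [left; apply exp_pos|]. exact H.
      - rewrite <- exp_plus. apply Rle_trans with (exp (- (1))).
        + destruct (Rle_lt_or_eq_dec (l' * (mu - u) + - (1 - exp (- l')) * mu) (- (1)) ltac:(lra)) as [Hlt|Heq].
          left; apply exp_increasing; exact Hlt. right; rewrite Heq; reflexivity.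
        + rewrite exp_Ropp. pose proof (exp_ineq1_le 1). apply Rmult_le_reg_r with (exp 1); [apply exp_pos|].
          rewrite Rinv_l by (pose proof (exp_pos 1); lra). lra. }
    assert (T3 : sumR (2 * n) (fun K => Ex p n (fun w => exp (l * AK n w K) * exp (- (l * (M + t))))) <= INR (2 * n) * exp (- (3 * L))).
    { rewrite <- sumR_constc. apply sumR_le. intros; apply T1. }
    assert (T4 : INR (2 * n) * exp (- (3 * L)) <= / 8).
    { rewrite mult_INR. replace (INR 2) with 2 by (simpl; lra).
      replace (- (3 * L)) with (- L + (- L + - L)) by ring. rewrite !exp_plus.
      unfold L. rewrite exp_Ropp, exp_ln by lra.
      apply Rmult_le_reg_r with (INR n * INR n); [nra|].
      replace (2 * INR n * (/ INR n * (/ INR n * / INR n)) * (INR n * INR n)) with 2 by (field; lra).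
      nra. }
    lra. }
  destruct (Ex_exists p hp n Phi 1 HE) as [w Hw].
  unfold Phi in Hw.
  assert (Hnn1 : forall K, 0 <= exp (l * AK n w K) * exp (- (l * (M + t)))) by (intros; pose proof (exp_pos (l * AK n w K)); pose proof (exp_pos (- (l * (M + t)))); nra).
  assert (Hnn2 : 0 <= exp (- l' * Xs n w) * exp (l' * (mu - u))) by (pose proof (exp_pos (- l' * Xs n w)); pose proof (exp_pos (l' * (mu - u))); nra).
  assert (GA : forall K, AK n w K < M + t).
  { intros K. destruct (le_lt_dec (2 * n) K).
    - rewrite AK_big by auto. lra.
    - assert (exp (l * AK n w K) * exp (- (l * (M + t))) <= sumR (2 * n) (fun K => exp (l * AK n w K) * exp (- (l * (M + t))))).
      { apply (sumR_term_le (2 * n) (fun K => exp (l * AK n w K) * exp (- (l * (M + t))))); auto. }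
      rewrite <- exp_plus in H. assert (l * AK n w K + - (l * (M + t)) < 0) by (apply exp_lt1; lra).
      assert (l * (AK n w K - (M + t)) < 0) by lra.
      destruct (Rlt_le_dec (AK n w K) (M + t)); auto. nra. }
  assert (GX : mu - u < Xs n w).
  { assert (0 <= sumR (2 * n) (fun K => exp (l * AK n w K) * exp (- (l * (M + t))))) by (apply sumR_nonneg; auto).
    assert (exp (- l' * Xs n w) * exp (l' * (mu - u)) < 1) by lra.
    rewrite <- exp_plus in H0. apply exp_lt1 in H0.
    destruct (Rlt_le_dec (mu - u) (Xs n w)); auto. nra. }
  exists (gamma + 2 * t + 1), (SA w n). split; [|split; [|split]].
  - replace (gamma + 2 * t + 1 - gamma) with (2 * t + 1) by ring. rewrite Rabs_right by lra.
    assert (1 <= sqrt (gamma * L)).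
    { apply sqrt_ge_of_sq; [lra|]. pose proof PI_gt3. nra. }
    unfold t. lra.
  - split; [apply SA_nodup|]. intros m. rewrite SA_rep.
    destruct (Z_lt_le_dec m 2).
    + rewrite rep_zero by auto. lra.
    + eapply Rle_trans; [apply rep_le_A; auto|]. specialize (GA (Z.to_nat (m - 2))). unfold M in GA. lra.
  - apply SA_range.
  - rewrite SA_len. fold (Xs n w). pose proof mu_lower.
    assert (0 <= Rpower (gamma * INR n) (1/4)) by (unfold Rpower; left; apply exp_pos).
    unfold u in GX. lra.
Qed.

End CaseA.


Lemma NoDup_list_prod {A B} (l1 : list A) (l2 : list B) : NoDup l1 -> NoDup l2 -> NoDup (list_prod l1 l2).
Proof.
  induction 1 as [|a l1 Ha Hl1 IH]; intros H2; simpl; [constructor|].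
  apply NoDup_app.
  - apply NoDup_map_NoDup_ForallPairs; auto. intros x y _ _ E. injection E; auto.
  - apply IH; auto.
  - intros [x y] Hx Hx'. apply in_map_iff in Hx. destruct Hx as [z [E _]]. injection E; intros; subst.
    apply in_prod_iff in Hx'. tauto.
Qed.

Lemma sumL_const {A} (l : list A) c : sumL l (fun _ => c) = INR (length l) * c.
Proof. induction l; simpl sumL; simpl length; [simpl; ring|]. rewrite IHl, S_INR. ring. Qed.

Definition Sidon (C : list nat) := forall a b c d, In a C -> In b C -> In c C -> In d C ->
  (a + b = c + d)%nat -> (a = c /\ b = d) \/ (a = d /\ b = c).

Lemma sidon_count C s : NoDup C -> Sidon C ->
  sumL C (fun c1 => sumL C (fun c2 => b2R (Nat.eqb (c1 + c2) s))) <= 2.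
Proof.
  intros HC HS.
  set (P := fun pr : nat * nat => Nat.eqb (fst pr + snd pr) s).
  replace (sumL C (fun c1 => sumL C (fun c2 => b2R (Nat.eqb (c1 + c2) s)))) with (INR (length (filter P (list_prod C C)))).
  2:{ rewrite length_filter_sumL, sumL_prod. reflexivity. }
  assert (ND : NoDup (filter P (list_prod C C))) by (apply NoDup_filter, NoDup_list_prod; auto).
  destruct (filter P (list_prod C C)) as [|[a b] F] eqn:EF.
  - simpl; lra.
  - assert (Hab : In (a, b) (filter P (list_prod C C))) by (rewrite EF; left; auto).
    apply filter_In in Hab. destruct Hab as [Hab Pab]. apply in_prod_iff in Hab. unfold P in Pab; simpl in Pab.
    apply Nat.eqb_eq in Pab.
    assert (incl ((a, b) :: F) [(a, b); (b, a)]).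
    { intros [c d] Hcd. rewrite <- EF in Hcd. apply filter_In in Hcd. destruct Hcd as [Hcd Pcd].
      apply in_prod_iff in Hcd. unfold P in Pcd; simpl in Pcd. apply Nat.eqb_eq in Pcd.
      destruct (HS c d a b) as [[-> ->]|[-> ->]]; try tauto; try lia; simpl; auto. }
    apply NoDup_incl_length in H; auto. apply le_INR in H. replace (INR (length [(a, b); (b, a)])) with 2 in H by (simpl; lra). exact H.
Qed.

Definition hB (Mm : nat) (cy : nat * nat) : Z := Z.of_nat (1 + fst cy + 2 * Mm * snd cy).

Lemma prod_rep_bound (C : list nat) (Mm Y : nat) (m : Z) : NoDup C -> (forall c, In c C -> (c < Mm)%nat) -> Sidon C ->
  INR (rep_count (map (hB Mm) (list_prod C (seq 0 Y))) m) <= 2 * INR Y.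
Proof.
  intros HC Hlt HS.
  rewrite rep_count_sumL, sumL_map, sumL_prod.
  set (m' := Z.to_nat (m - 2)). set (sg := (m' mod (2 * Mm))%nat). set (ta := (m' / (2 * Mm))%nat).
  apply Rle_trans with (sumL C (fun c1 => sumL (seq 0 Y) (fun y1 => sumL C (fun c2 => b2R (Nat.eqb (c1 + c2) sg))))).
  - apply sumL_le. intros c1 Hc1. apply sumL_le. intros y1 Hy1.
    rewrite sumL_map, sumL_prod. apply sumL_le. intros c2 Hc2.
    apply Rle_trans with (sumL (seq 0 Y) (fun y2 => b2R (Nat.eqb (c1 + c2) sg) * b2R (Nat.eqb (y1 + y2) ta))).
    + apply sumL_le. intros y2 _. unfold hB; simpl fst; simpl snd.
      destruct (Z.eqb_spec (Z.of_nat (1 + c1 + 2 * Mm * y1) + Z.of_nat (1 + c2 + 2 * Mm * y2)) m) as [E|E].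
      * assert (E' : m' = (2 * Mm * (y1 + y2) + (c1 + c2))%nat) by (unfold m'; lia).
        pose proof (Hlt c1 Hc1). pose proof (Hlt c2 Hc2).
        assert (sg = (c1 + c2)%nat) by (unfold sg; symmetry; apply (Nat.mod_unique _ _ (y1 + y2)); lia).
        assert (ta = (y1 + y2)%nat) by (unfold ta; symmetry; apply (Nat.div_unique _ _ _ (c1 + c2)); lia).
        rewrite H1, H2, !Nat.eqb_refl. simpl; lra.
      * simpl b2R at 1. pose proof (b2R_bounds (Nat.eqb (c1 + c2) sg)). pose proof (b2R_bounds (Nat.eqb (y1 + y2) ta)). nra.
    + rewrite sumL_scal. pose proof (b2R_bounds (Nat.eqb (c1 + c2) sg)).
      assert (sumL (seq 0 Y) (fun y2 => b2R (Nat.eqb (y1 + y2) ta)) <= 1).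
      { rewrite sumL_seq. apply Rle_trans with (sumR Y (fun y2 => b2R (Nat.eqb y2 (ta - y1)) * 1)).
        - apply sumR_le. intros y2 _. unfold b2R; bdestr; try lia; lra.
        - rewrite sumR_single. rewrite Rmult_1_r. apply b2R_le1. }
      nra.
  - rewrite (sumL_ext C _ (fun c1 => INR Y * sumL C (fun c2 => b2R (Nat.eqb (c1 + c2) sg)))).
    2:{ intros c1 _. rewrite sumL_const, length_seq. reflexivity. }
    rewrite sumL_scal. pose proof (sidon_count C sg HC HS). pose proof (pos_INR Y). nra.
Qed.


Lemma hB_nodup C Mm Y : NoDup C -> (forall c, In c C -> (c < Mm)%nat) -> NoDup (map (hB Mm) (list_prod C (seq 0 Y))).
Proof.
  intros HC Hlt. apply NoDup_map_NoDup_ForallPairs.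
  - intros [c y] [c' y'] H1 H2 E. unfold hB in E; simpl in E.
    apply in_prod_iff in H1, H2. pose proof (Hlt c (proj1 H1)). pose proof (Hlt c' (proj1 H2)).
    assert (c + 2 * Mm * y = c' + 2 * Mm * y')%nat by lia.
    destruct (Nat.lt_trichotomy y y') as [Hy|[Hy|Hy]].
    + exfalso. assert (2 * Mm * y + 2 * Mm <= 2 * Mm * y')%nat by nia. lia.
    + subst. f_equal. lia.
    + exfalso. assert (2 * Mm * y' + 2 * Mm <= 2 * Mm * y)%nat by nia. lia.
  - apply NoDup_list_prod; auto. apply seq_NoDup.
Qed.

Lemma INR_lt_nat a b : INR a < INR b -> (a < b)%nat.
Proof. intros H. apply INR_lt; auto. Qed.

Section CaseB.
Variable gamma : R.
Variable n : nat.
Hypothesis Hg : PI <= gamma.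
Hypothesis Hn : gamma <= INR n.
Hypothesis HL : gamma < 9 * ln (INR n).

Let L := ln (INR n).
Let Y := Z.to_nat (up (14 * gamma)).

Lemma Y_bounds : 14 * gamma < INR Y <= 14 * gamma + 1.
Proof.
  unfold Y. destruct (archimed (14 * gamma)) as [H1 H2]. pose proof PI_gt3.
  assert (0 < IZR (up (14 * gamma))) by lra.
  assert (0 <= up (14 * gamma))%Z by (apply le_IZR; lra).
  rewrite INR_IZR_INZ, Z2Nat.id by auto. lra.
Qed.

Lemma gamma_small : gamma <= 3 * sqrt (gamma * L).
Proof.
  pose proof PI_gt3. apply Rle_trans with (sqrt (gamma * gamma)).
  - rewrite sqrt_square; lra.
  - replace (3 * sqrt (gamma * L)) with (sqrt (9 * (gamma * L))).
    + apply sqrt_le_1_alt. unfold L. nra.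
    + rewrite sqrt_mult by (try lra; unfold L; nra). replace 9 with (3 * 3) by ring. rewrite sqrt_square; lra.
Qed.

Theorem caseB_main : exists g S, Rabs (g - gamma) <= 84 * sqrt (gamma * L) /\ BstarSet g S /\
  (forall s, In s S -> (1 <= s <= Z.of_nat n)%Z) /\
  INR (length S) >= 2 * sqrt (gamma * INR n / PI) - 14 * (gamma + Rpower (gamma * INR n) (1/4)).
Proof.
  pose proof PI_gt3 as P3. pose proof Y_bounds as YB. pose proof gamma_small as GS.
  assert (HR : 0 <= Rpower (gamma * INR n) (1/4)) by (unfold Rpower; left; apply exp_pos).
  assert (Ypos : (0 < Y)%nat) by (apply INR_lt_nat; simpl; lra).
  set (X := (n / (2 * Y))%nat).
  assert (HX1 : (2 * Y * X <= n)%nat) by (apply Nat.Div0.mul_div_le).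
  assert (HX2 : (n < 2 * Y * (X + 1))%nat).
  { pose proof (Nat.div_mod n (2 * Y) ltac:(lia)). pose proof (Nat.mod_upper_bound n (2 * Y) ltac:(lia)). unfold X. lia. }
  assert (Hsq : forall A, 0 <= A -> 4 * (gamma * INR n / PI) <= A * A -> 2 * sqrt (gamma * INR n / PI) <= A).
  { intros A HA H. replace (2 * sqrt (gamma * INR n / PI)) with (sqrt (4 * (gamma * INR n / PI))).
    - apply sqrt_le_of_sq; auto. apply Rmult_le_pos; [lra|]. apply Rmult_le_pos; [nra|left; apply Rinv_0_lt_compat; lra].
    - rewrite sqrt_mult by (first [lra | apply Rmult_le_pos; [nra|left; apply Rinv_0_lt_compat; lra]]).
      replace 4 with (2 * 2) by ring. rewrite sqrt_square; lra. }
  destruct (Nat.lt_ge_cases X 4) as [HX|HX].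
  -
    exists gamma, []. split; [|split; [|split]].
    + replace (gamma - gamma) with 0 by ring. rewrite Rabs_R0. pose proof (sqrt_pos (gamma * L)). lra.
    + split; [constructor|]. intros m. unfold rep_count. simpl. lra.
    + intros s [].
    + simpl length. simpl INR.
      assert (2 * sqrt (gamma * INR n / PI) <= 14 * gamma).
      { apply Hsq; [lra|].
        assert (INR n < 8 * INR Y).
        { assert (n < 2 * Y * 4)%nat by nia. apply lt_INR in H. rewrite !mult_INR in H. replace (INR 2) with 2 in H by (simpl; lra). replace (INR 4) with 4 in H by (simpl; lra). lra. }
        apply Rmult_le_reg_r with PI; [lra|].
        replace (4 * (gamma * INR n / PI) * PI) with (4 * gamma * INR n) by (field; lra). nra. }
      lra.
  -
    set (j := Nat.log2 X). set (k := (j / 2)%nat). set (q := (2 ^ k)%nat).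
    assert (Xpos : (0 < X)%nat) by lia.
    destruct (Nat.log2_spec X Xpos) as [Hj1 Hj2]. fold j in Hj1, Hj2.
    assert (Hj : (2 <= j)%nat).
    { destruct (Nat.le_gt_cases 2 j); auto. assert (2 ^ S j <= 2 ^ 2)%nat by (apply Nat.pow_le_mono_r; lia). change (2 ^ 2)%nat with 4%nat in H0. lia. }
    assert (Hk : (0 < k)%nat) by (unfold k; apply Nat.div_str_pos; lia).
    assert (Hq1 : (q * q <= X)%nat).
    { unfold q. rewrite <- Nat.pow_add_r. apply Nat.le_trans with (2 ^ j)%nat; auto.
      apply Nat.pow_le_mono_r; [lia|]. unfold k. pose proof (Nat.div_mod j 2 ltac:(lia)). pose proof (Nat.mod_upper_bound j 2 ltac:(lia)). lia. }
    assert (Hq2 : (X < 4 * (q * q))%nat).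
    { apply Nat.lt_le_trans with (2 ^ S j)%nat; auto. unfold q. rewrite <- Nat.pow_add_r.
      replace 4%nat with (2 ^ 2)%nat by reflexivity. rewrite <- Nat.pow_add_r. apply Nat.pow_le_mono_r; [lia|].
      unfold k. pose proof (Nat.div_mod j 2 ltac:(lia)). pose proof (Nat.mod_upper_bound j 2 ltac:(lia)). lia. }
    assert (Hq2' : (2 <= q)%nat).
    { unfold q. replace 2%nat with (2 ^ 1)%nat at 1 by reflexivity. apply Nat.pow_le_mono_r; lia. }
    destruct (BoseM.bose_list Hk) as [C [HC [HCl [HCr HCs]]]].
    fold q in HCl, HCr.
    set (Mm := (q * q - 1)%nat) in *.
    exists (2 * INR Y), (map (hB Mm) (list_prod C (seq 0 Y))). split; [|split; [|split]].
    + rewrite Rabs_right by lra. lra.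
    + split.
      * apply hB_nodup; auto.
      * intros m. apply prod_rep_bound; auto.
    + intros z Hz. apply in_map_iff in Hz. destruct Hz as [[c y] [<- Hz]]. apply in_prod_iff in Hz.
      destruct Hz as [Hc Hy]. apply in_seq in Hy. pose proof (HCr c Hc). unfold hB; simpl.
      assert (c + 2 * Mm * y < 2 * Mm * Y)%nat.
      { assert (2 * Mm * y + 2 * Mm <= 2 * Mm * Y)%nat by nia. lia. }
      assert (2 * Mm * Y <= n)%nat.
      { assert (Mm * Y <= q * q * Y)%nat by (unfold Mm; nia). assert (q * q * Y <= X * Y)%nat by nia. nia. }
      lia.
    + rewrite length_map, length_prod, length_seq.
      apply Rle_ge. apply Rle_trans with (INR (q * Y)).
      * assert (HnR : (n < 10 * Y * (q * q))%nat) by nia.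
        cut (2 * sqrt (gamma * INR n / PI) <= INR (q * Y)); [pose proof (sqrt_pos (gamma * L)); lra|].
        apply Hsq; [apply pos_INR|].
        apply lt_INR in HnR. rewrite !mult_INR in HnR. rewrite mult_INR. replace (INR 10) with 10 in HnR by (simpl; lra).
        apply Rmult_le_reg_r with PI; [lra|].
        replace (4 * (gamma * INR n / PI) * PI) with (4 * gamma * INR n) by (field; lra).
        pose proof (pos_INR q). pose proof (pos_INR n).
        assert (4 * gamma * INR n <= 4 * gamma * (10 * INR Y * (INR q * INR q)))  by (apply Rmult_le_compat_l; lra).
        assert (40 * gamma <= 3 * INR Y) by lra.
        assert (0 <= INR Y * (INR q * INR q)) by (pose proof (pos_INR Y); apply Rmult_le_pos; nra).
        assert (40 * gamma * (INR Y * (INR q * INR q)) <= 3 * INR Y * (INR Y * (INR q * INR q))) by (apply Rmult_le_compat_r; lra).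
        assert (0 <= INR Y * (INR Y * (INR q * INR q))) by (pose proof (pos_INR Y); apply Rmult_le_pos; lra).
        assert (3 * (INR Y * (INR Y * (INR q * INR q))) <= PI * (INR Y * (INR Y * (INR q * INR q)))) by (apply Rmult_le_compat_r; lra).
        replace (INR q * INR Y * (INR q * INR Y) * PI) with (PI * (INR Y * (INR Y * (INR q * INR q)))) by ring.
        lra.
      * apply le_INR. nia.
Qed.

End CaseB.


Theorem proposition3p8 :
  exists c1 c2 : R, 0 < c1 /\ 0 < c2 /\
    forall (gamma : R) (n : nat),
      PI <= gamma -> gamma <= INR n ->
      exists (g : R) (S : list Z),
        Rabs (g - gamma) <= c1 * sqrt (gamma * ln (INR n)) /\
        BstarSet g S /\
        (forall s, In s S -> (1 <= s <= Z.of_nat n)%Z) /\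
        INR (length S) >= 2 * sqrt (gamma * INR n / PI)
                          - c2 * (gamma + Rpower (gamma * INR n) (1/4)).
Proof.
  exists 84, 14. split; [lra|]. split; [lra|].
  intros gamma n Hg Hn.
  assert (HR : 0 <= Rpower (gamma * INR n) (1/4)) by (unfold Rpower; left; apply exp_pos).
  pose proof PI_gt3.
  destruct (Rle_lt_dec (9 * ln (INR n)) gamma) as [HA|HB].
  - destruct (caseA_main gamma n Hg Hn HA) as [g [S [H1 [H2 [H3 H4]]]]].
    exists g, S. split; [|split; [|split]]; auto.
    + pose proof (sqrt_pos (gamma * ln (INR n))). lra.
    + lra.
  - apply (caseB_main gamma n Hg Hn HB).
Qed.
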